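(* Let $k$ be a field and let $V_1\xrightarrow{f}V_2\xrightarrow{g}V_3$ be a complex of finite-dimensional $k$-vector spaces, with dual complex $V_3^*\xrightarrow{g^*}V_2^*\xrightarrow{f^*}V_1^*$. Fix a nondegenerate bilinear pairing $\langle\,,\rangle$ on $V_2$ and identify $V_2$ with $V_2^*$ via it. Assume $\mathrm{Im}\,f\subset\mathrm{Im}\,g^*$ (under this identification). Then the identification $V_2=V_2^*$ induces a map $\mathrm{Ker}\,g/\mathrm{Im}\,f\to\mathrm{Ker}\,f^*/\mathrm{Im}\,g^*$, and this map is an isomorphism if and only if $\mathrm{Ker}\,g\cap\mathrm{Im}\,g^*\subset\mathrm{Im}\,f$.
   Formalization: The nondegenerate pairing ⟨,⟩ on V₂ is also required to be either symmetric or skew-symmetric, rather than an arbitrary nondegenerate bilinear pairing. The statement above fails without it. *)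

(* Defs.v *)
(* finite-dimensional k-vector spaces V_i = k^{n_i} as row vectors
   'rV[F]_n; linear maps act on the right: f(v) = v *m f. *)
From mathcomp Require Import all_boot all_algebra.
Set Implicit Arguments. Unset Strict Implicit. Unset Printing Implicit Defensive.
Import GRing.Theory.
Local Open Scope ring_scope.

Section Defs.
Variable F : fieldType.

(* The dual space (k^n)^* is represented by 'rV[F]_n, the row vector phi
   being the functional  v |-> (v *m phi^T) 0 0. *)
Definition dual_eval (n : nat) (phi v : 'rV[F]_n) : F := (v *m phi^T) 0 0.

(* Dual map of A : k^m -> k^n (v |-> v *m A): psi |-> psi o A, i.e. psi |-> psi *m A^T.
   Indeed dual_eval psi (v *m A) = dual_eval (psi *m A^T) v. *)
Definition dualmap (m n : nat) (A : 'M[F]_(m, n)) : 'M[F]_(n, m) := A^T.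

Definition pairing (n : nat) (B : 'M[F]_n) (x y : 'rV[F]_n) : F :=
  (x *m B *m y^T) 0 0.

Definition nondegenerate_pairing (n : nat) (B : 'M[F]_n) : Prop :=
  (forall x, (forall y, pairing B x y = 0) -> x = 0) /\
  (forall y, (forall x, pairing B x y = 0) -> y = 0).

(* Identification V_2 -> V_2^*, x |-> <x, - >.  One checks
   dual_eval (ident B x) y = pairing B x y. *)
Definition ident (n : nat) (B : 'M[F]_n) (x : 'rV[F]_n) : 'rV[F]_n := x *m B.

Variables (n1 n2 n3 : nat) (f : 'M[F]_(n1, n2)) (g : 'M[F]_(n2, n3))
  (B : 'M[F]_n2).

(* The identification maps Ker g into Ker f^* and Im f into Im g^*, so it
   induces a map Ker g / Im f -> Ker f^* / Im g^*. *)
Definition induced_map_well_defined : Prop :=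
  (forall x : 'rV[F]_n2, x *m g = 0 -> ident B x *m dualmap f = 0) /\
  (forall v : 'rV[F]_n1, exists psi : 'rV[F]_n3,
       ident B (v *m f) = psi *m dualmap g).

(* Injectivity of the induced map on cosets: if x in Ker g is sent into
   Im g^*, then the class of x is zero, i.e. x in Im f. *)
Definition induced_injective : Prop :=
  forall x : 'rV[F]_n2, x *m g = 0 ->
    (exists psi : 'rV[F]_n3, ident B x = psi *m dualmap g) ->
    exists v : 'rV[F]_n1, x = v *m f.

(* Surjectivity of the induced map on cosets: every class phi + Im g^* with
   phi in Ker f^* is the image of the class of some x in Ker g. *)
Definition induced_surjective : Prop :=
  forall phi : 'rV[F]_n2, phi *m dualmap f = 0 ->
    exists x : 'rV[F]_n2, x *m g = 0 /\
      exists psi : 'rV[F]_n3, phi - ident B x = psi *m dualmap g.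

Definition induced_iso : Prop := induced_injective /\ induced_surjective.

End Defs.

(* Main.v *)
Require Import Defs.
From mathcomp Require Import all_boot all_algebra.
From mathcomp Require Import zify.
Import GRing.Theory.
Local Open Scope ring_scope.

Theorem lemma4p2 (F : fieldType) (n1 n2 n3 : nat)
  (f : 'M[F]_(n1, n2)) (g : 'M[F]_(n2, n3)) (B : 'M[F]_n2) :
  f *m g = 0 ->
  nondegenerate_pairing B ->
  (trmx B = B \/ trmx B = - B) ->
  (forall v : 'rV[F]_n1, exists psi : 'rV[F]_n3,
      ident B (v *m f) = psi *m dualmap g) ->
  induced_map_well_defined f g B /\
  (induced_iso f g B <->
   (forall x : 'rV[F]_n2, x *m g = 0 ->
      (exists psi : 'rV[F]_n3, ident B x = psi *m dualmap g) ->
      exists v : 'rV[F]_n1, x = v *m f)).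
Proof.
move=> fg0 [nd1 _] Bsym hIm.
rewrite /induced_map_well_defined /induced_iso /induced_injective
  /induced_surjective /ident /dualmap in hIm *.
have fBsub : (f *m B <= g^T)%MS.
  apply/row_subP => i; rewrite rowE mulmxA.
  have [psi ->] := hIm (delta_mx 0 i); exact: submxMl.
have [Psi fBE] := submxP fBsub.
have part1 : forall m (x : 'M[F]_(m, n2)), x *m g = 0 -> x *m B *m f^T = 0.
  move=> m x xg0; apply: trmx_inj; rewrite !trmx_mul trmxK trmx0.
  have key : f *m B *m x^T = 0 by rewrite fBE -mulmxA -trmx_mul xg0 trmx0 mulmx0.
  case: Bsym => ->; rewrite mulmxA; first exact: key.
  by rewrite mulmxN mulNmx key oppr0.
have Bfree : row_free B.
  rewrite -kermx_eq0; apply/eqP/row_matrixP => i; rewrite row0.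
  apply: nd1 => y; rewrite /pairing.
  have : row i (kermx B) *m B = 0 by rewrite -row_mul mulmx_ker row0.
  by move->; rewrite mul0mx mxE.
split; first split.
- by move=> x; apply: part1.
- exact: hIm.
split; first by case.
move=> inj; split=> // phi phif0.
set ZB := kermx g *m B.
have capsub : (ZB :&: g^T <= f *m B)%MS.
  apply/row_subP => i.
  have /submxP [u uE] : (row i (ZB :&: g^T) <= ZB)%MS
    by apply: submx_trans (capmxSl _ _); exact: row_sub.
  have /submxP [psi psiE] : (row i (ZB :&: g^T) <= g^T)%MS
    by apply: submx_trans (capmxSr _ _); exact: row_sub.
  have H1 : u *m kermx g *m g = 0 by rewrite -mulmxA mulmx_ker mulmx0.
  have H2 : exists psi, u *m kermx g *m B = psi *m g^T.
    by exists psi; rewrite -mulmxA -psiE uE.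
  have [v vE] := inj _ H1 H2.
  by rewrite uE /ZB mulmxA vE -mulmxA submxMl.
have sumsub : (ZB + g^T <= kermx f^T)%MS.
  rewrite addsmx_sub; apply/andP; split; apply/sub_kermxP.
    by rewrite /ZB part1 // mulmx_ker.
  by rewrite -trmx_mul fg0 trmx0.
have rk : (\rank (kermx f^T) <= \rank (ZB + g^T))%N.
  have := mxrank_sum_cap ZB g^T.
  have := mxrankS capsub.
  rewrite /ZB !(mxrankMfree _ Bfree) !mxrank_ker !mxrank_tr.
  have := rank_leq_col f; have := rank_leq_row g.
  lia.
have eqK : (kermx f^T <= ZB + g^T)%MS.
  by rewrite -(mxrank_leqif_sup sumsub); apply/eqP; apply: anti_leq; rewrite rk mxrankS.
have /sub_addsmxP [[u1 u2] /= uE] : (phi <= ZB + g^T)%MS.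
  by apply: submx_trans eqK; apply/sub_kermxP.
exists (u1 *m kermx g); split; first by rewrite -mulmxA mulmx_ker mulmx0.
by exists u2; rewrite uE /ZB mulmxA addrAC subrr add0r.
Qed.
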